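(* Let $a,b,c,\alpha,\beta,\gamma,\lambda\in\mathbb{R}$ with $\alpha=0$ whenever $\gamma\neq 0$, and let $\Omega\subset\mathbb{R}$ be a compact interval containing $0$ in its interior. Consider the one-input control-affine system on $\mathbb{R}^2$ (coordinates $(s,t)$) $$\dot s=\beta s+\omega b,\qquad \dot t=(\lambda+\beta)t+\tfrac12\alpha s^2+\gamma s+\omega(c+as),\qquad \omega\in\Omega,$$ i.e. with drift $f_0(s,t)=\big(\beta s,(\lambda+\beta)t+\tfrac12\alpha s^2+\gamma s\big)$ and control vector field $f_1(s,t)=(b,c+as)$. Then this system satisfies the Lie algebra rank condition if and only if $$b\cdot\Big(\big(b\alpha+a(\lambda-\beta)\big)^2+\big(b\gamma+c\lambda\big)^2\Big)\neq 0.$$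
   Context: A control-affine system $\dot x=f_0(x)+\omega f_1(x)$ on a manifold $M$ satisfies the Lie algebra rank condition (LARC) if the smallest Lie algebra of vector fields containing $f_0$ and $f_1$, evaluated at each point $x\in M$, spans the tangent space $T_xM$. This system is the linear control system induced on the homogeneous space $(\mathbb{R}\mathbf e_1\times\{0\})\backslash\mathbb{H}\simeq\mathbb{R}^2$ of the 3-dimensional Heisenberg group. *)

(* Defs.v *)
From HB Require Import structures.
From mathcomp Require Import all_boot all_order all_algebra.
From mathcomp Require Import mpoly.
From mathcomp Require Import reals.
Set Implicit Arguments. Unset Strict Implicit. Unset Printing Implicit Defensive.
Import Order.TTheory GRing.Theory Num.Theory.
Local Open Scope ring_scope.

(* A polynomial vector field on R^2 (coordinates x_0 = s, x_1 = t):
   its two component functions, as polynomials in s, t. *)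
Definition vfield (R : ringType) := 'I_2 -> {mpoly R[2]}.

Definition lie_bracket (R : ringType) (X Y : vfield R) : vfield R :=
  fun i => \sum_(j < 2) (X j * mderiv j (Y i) - Y j * mderiv j (X i)).

Definition vf_add (R : ringType) (X Y : vfield R) : vfield R := fun i => X i + Y i.
Definition vf_scale (R : ringType) (c : R) (X : vfield R) : vfield R :=
  fun i => c *: X i.

Inductive in_lie_alg (R : ringType) (f0 f1 : vfield R) : vfield R -> Prop :=
  | lie_gen0 : in_lie_alg f0 f1 f0
  | lie_gen1 : in_lie_alg f0 f1 f1
  | lie_add X Y : in_lie_alg f0 f1 X -> in_lie_alg f0 f1 Y ->
      in_lie_alg f0 f1 (vf_add X Y)
  | lie_scale c X : in_lie_alg f0 f1 X -> in_lie_alg f0 f1 (vf_scale c X)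
  | lie_br X Y : in_lie_alg f0 f1 X -> in_lie_alg f0 f1 Y ->
      in_lie_alg f0 f1 (lie_bracket X Y).

Definition vf_eval (R : comRingType) (X : vfield R) (x : 'I_2 -> R) : 'I_2 -> R :=
  fun i => (X i).@[x].

Definition LARC (R : comRingType) (f0 f1 : vfield R) : Prop :=
  forall x v : 'I_2 -> R, exists (k : nat) (Vs : 'I_k -> vfield R) (cs : 'I_k -> R),
    (forall l, in_lie_alg f0 f1 (Vs l)) /\
    forall i, v i = \sum_(l < k) cs l * vf_eval (Vs l) x i.

Definition drift (R : realType) (alpha beta gamma lambda : R) : vfield R :=
  fun i => if (i : nat) == 0%N then beta *: 'X_0
           else (lambda + beta) *: 'X_1 + (alpha / 2) *: ('X_0 * 'X_0)
                + gamma *: 'X_0.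

Definition control_field (R : realType) (a b c : R) : vfield R :=
  fun i => if (i : nat) == 0%N then b%:MP else c%:MP + a *: 'X_0.

(* Main.v *)
Require Import Defs.
From HB Require Import structures.
From mathcomp Require Import all_boot all_order all_algebra.
From mathcomp Require Import mpoly.
From mathcomp Require Import reals.
From mathcomp Require Import ring lra.
Import Order.TTheory GRing.Theory Num.Theory.
Local Open Scope ring_scope.

Lemma mderivXU (R : comRingType) n (i j : 'I_n) :
  mderiv i ('X_j : {mpoly R[n]}) = ((j == i)%:R)%:MP.
Proof.
rewrite mderivX mnm1E; case: eqP => [->|_].
  have -> : (U_(i) - U_(i))%MM = 0%MM by apply/mnmP => k; rewrite mnmBE subnn mnm0E.
  by rewrite mpolyX0 scale1r mpolyC1.
by rewrite scale0r mpolyC0.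
Qed.

Lemma sum2 (V : nmodType) (F : 'I_2 -> V) : \sum_(j < 2) F j = F 0 + F 1.
Proof.
rewrite big_ord_recl big_ord1; by congr (F _ + F _); apply: val_inj.
Qed.

Lemma d00 (R : comRingType) : mderiv 0 ('X_0 : {mpoly R[2]}) = 1.
Proof. by rewrite mderivXU eqxx mpolyC1. Qed.
Lemma d11 (R : comRingType) : mderiv 1 ('X_1 : {mpoly R[2]}) = 1.
Proof. by rewrite mderivXU eqxx mpolyC1. Qed.
Lemma d01 (R : comRingType) : mderiv 0 ('X_1 : {mpoly R[2]}) = 0.
Proof. by rewrite mderivXU /= mpolyC0. Qed.
Lemma d10 (R : comRingType) : mderiv 1 ('X_0 : {mpoly R[2]}) = 0.
Proof. by rewrite mderivXU /= mpolyC0. Qed.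

Definition D {R : comRingType} (X : vfield R) (p : {mpoly R[2]}) :=
  \sum_(j < 2) X j * mderiv j p.

Lemma D_bracket (R : comRingType) (X Y : vfield R) h :
  D (lie_bracket X Y) h = D X (D Y h) - D Y (D X h).
Proof.
rewrite /D /lie_bracket !sum2 !(mderivD, mderivB, mderivM).
rewrite [mderiv 1 (mderiv 0 h)]mderiv_comm.
ring.
Qed.

Lemma D_mulC {R : comRingType} (X : vfield R) c p : D X (c%:MP * p) = c%:MP * D X p.
Proof. rewrite /D !sum2 !mderiv_mulC; ring. Qed.

Lemma D_inv {R : comRingType} (f0 f1 : vfield R) h m0 m1 :
  D f0 h = m0%:MP * h -> D f1 h = m1%:MP * h ->
  forall X, in_lie_alg f0 f1 X -> exists m, D X h = m%:MP * h.
Proof.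
move=> H0 H1 X; elim => {X}.
- by exists m0.
- by exists m1.
- move=> X Y _ [mx Hx] _ [my Hy]; exists (mx + my).
  move: Hx Hy; rewrite /D /vf_add !sum2 => Hx Hy.
  rewrite mpolyCD; transitivity (mx%:MP * h + my%:MP * h); last ring.
  rewrite -Hx -Hy; ring.
- move=> c X _ [mx Hx]; exists (c * mx).
  move: Hx; rewrite /D /vf_scale !sum2 => Hx.
  rewrite -!mul_mpolyC mpolyCM; transitivity (c%:MP * (mx%:MP * h)); last ring.
  rewrite -Hx; ring.
- move=> X Y _ [mx Hx] _ [my Hy]; exists 0.
  rewrite D_bracket Hx Hy !D_mulC Hx Hy mpolyC0; ring.
Qed.

Lemma not_larc (R : realType) (f0 f1 : vfield R) h m0 m1 (x : 'I_2 -> R) (i : 'I_2) :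
  D f0 h = m0%:MP * h -> D f1 h = m1%:MP * h -> h.@[x] = 0 ->
  (mderiv i h).@[x] != 0 -> ~ LARC f0 f1.
Proof.
move=> H0 H1 hx gi HL.
have [k [Vs [cs [HV Hv]]]] := HL x (fun j => (mderiv j h).@[x]).
have : \sum_(j < 2) (mderiv j h).@[x] ^+ 2 = 0.
  transitivity (\sum_(j < 2) \sum_(l < k) cs l * vf_eval (Vs l) x j * (mderiv j h).@[x]).
    apply: eq_bigr => j _; rewrite expr2 {1}Hv mulr_suml //.
  rewrite exchange_big /= big1 // => l _.
  have [m Hm] := @D_inv _ _ _ _ _ _ H0 H1 _ (HV l).
  have := congr1 (meval x) Hm; rewrite mevalM mevalC hx mulr0 /D sum2 mevalD !mevalM.
  by rewrite sum2 /vf_eval -!mulrA -mulrDr => ->; rewrite mulr0.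
move/eqP; rewrite psumr_eq0 => [/allP H|]; last by move=> j _; apply: sqr_ge0.
have := H i (mem_index_enum i); rewrite sqrf_eq0 => /eqP; move/eqP: gi; done.
Qed.

Lemma span2 {R : realType} (f0 f1 X Y : vfield R) x :
  in_lie_alg f0 f1 X -> in_lie_alg f0 f1 Y ->
  (X 0).@[x] * (Y 1).@[x] - (X 1).@[x] * (Y 0).@[x] != 0 ->
  forall v : 'I_2 -> R, exists (k : nat) (Vs : 'I_k -> vfield R) (cs : 'I_k -> R),
    (forall l, in_lie_alg f0 f1 (Vs l)) /\
    forall i, v i = \sum_(l < k) cs l * vf_eval (Vs l) x i.
Proof.
move=> HX HY Hd v.
set d := _ - _ in Hd.
exists 2, (fun l : 'I_2 => if (l : nat) == 0%N then X else Y).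
exists (fun l : 'I_2 => if (l : nat) == 0%N
   then (v 0 * (Y 1).@[x] - v 1 * (Y 0).@[x]) / d
   else ((X 0).@[x] * v 1 - (X 1).@[x] * v 0) / d).
split; first by move=> l; case: ifP.
move=> i; rewrite sum2 /vf_eval /=.
have -> : i = (if (i : nat) == 0%N then 0 else 1).
  by apply: val_inj; case: i => [[|[|]]] //.
case: ifP => _; rewrite /d; field; exact: Hd.
Qed.

Ltac crunch := rewrite !(mderivD, mderivB, mderivN, mderivM, mderivZ, mderivC, d00, d01, d10, d11) -?mul_mpolyC.

Section Main.
Variables (R : realType) (a b c alpha beta gamma lambda : R).
Let f0 := drift alpha beta gamma lambda.
Let f1 := control_field a b c.

Lemma f00 : f0 0 = beta *: 'X_0. Proof. by []. Qed.
Lemma f01 : f0 1 = (lambda + beta) *: 'X_1 + (alpha / 2) *: ('X_0 * 'X_0) + gamma *: 'X_0.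
Proof. by []. Qed.
Lemma f10 : f1 0 = b%:MP. Proof. by []. Qed.
Lemma f11 : f1 1 = c%:MP + a *: 'X_0. Proof. by []. Qed.

Lemma G0 : lie_bracket f1 f0 0 = (b * beta)%:MP.
Proof.
rewrite /lie_bracket sum2 f00 f01 f10 f11.
rewrite !(mderivD, mderivB, mderivN, mderivM, mderivZ, mderivC, d00, d01, d10, d11) -?mul_mpolyC.
ring.
Qed.


Lemma G1 : lie_bracket f1 f0 1 =
  (b * gamma + c * (lambda + beta))%:MP + (b * (alpha / 2 * 2) + a * lambda)%:MP * 'X_0.
Proof.
rewrite /lie_bracket sum2 f00 f01 f10 f11; crunch. ring.
Qed.

Lemma K0 : lie_bracket f1 (lie_bracket f1 f0) 0 = 0.
Proof.
rewrite /lie_bracket sum2 -/(lie_bracket _ _ 0) -/(lie_bracket _ _ 1) G0 G1 f10 f11; crunch. ring.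
Qed.

Lemma K1 : lie_bracket f1 (lie_bracket f1 f0) 1 =
  (b * (b * (alpha / 2 * 2) + a * lambda) - b * beta * a)%:MP.
Proof.
rewrite /lie_bracket sum2 -/(lie_bracket _ _ 0) -/(lie_bracket _ _ 1) G0 G1 f10 f11; crunch. ring.
Qed.
End Main.

Theorem proposition5 (R : realType) (a b c alpha beta gamma lambda : R)
  (Hag : gamma != 0 -> alpha = 0)
  (omega_min omega_max : R) (HOmega : omega_min < 0 < omega_max) :
  LARC (drift alpha beta gamma lambda) (control_field a b c) <->
  b * ((b * alpha + a * (lambda - beta)) ^+ 2 + (b * gamma + c * lambda) ^+ 2) != 0.
Proof.
have h2 : alpha / 2 * 2 = alpha by rewrite divfK // pnatr_eq0.
set A := b * alpha + a * (lambda - beta).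
set B := b * gamma + c * lambda.
have hA : b * (alpha / 2 * 2) + a * (lambda - beta) = A by rewrite h2.
split.
- move=> HL; apply/eqP => Hz.
  have [Hb|Hb] := eqVneq b 0.
  + apply: (@not_larc R _ _ 'X_0 beta 0 (fun _ => 0) 0 _ _ _ _ HL).
    * rewrite /D sum2 f00 f01 d00 d10 -!mul_mpolyC; ring.
    * rewrite /D sum2 f10 f11 d00 d10 Hb mpolyC0; ring.
    * by rewrite mevalXU.
    * by rewrite d00 meval1 oner_neq0.
  have [HA HB] : A = 0 /\ B = 0.
    move/eqP: Hz; rewrite mulf_eq0 (negPf Hb) /=.
    rewrite paddr_eq0 ?sqr_ge0 // !sqrf_eq0 => /andP [/eqP -> /eqP ->]; by [].
  pose h : {mpoly R[2]} := (2 * b)%:MP * 'X_1 - (2 * c)%:MP * 'X_0 - a%:MP * ('X_0 * 'X_0).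
  apply: (@not_larc R _ _ h (lambda + beta) 0 (fun _ => 0) 1 _ _ _ _ HL).
  * transitivity ((lambda + beta)%:MP * h + (b * (alpha / 2 * 2) + a * (lambda - beta))%:MP * ('X_0 * 'X_0)
       + (2 * B)%:MP * 'X_0).
      rewrite /D /h /B sum2 f00 f01; crunch; ring.
    by rewrite hA HA HB mulr0 !mpolyC0; ring.
  * rewrite /D /h sum2 f10 f11; crunch; ring.
  * rewrite /h !(mevalD, mevalB, mevalN, mevalM, mevalC, mevalXU); ring.
  * rewrite /h; crunch; rewrite !(mevalD, mevalB, mevalN, mevalM, mevalC, mevalXU, meval0, meval1).
    have -> : (0 * 0 + 2 * b * 1 - (0 * 0 + 2 * c * 0) - (0 * (0 * 0) + a * (0 * 0 + 0 * 0)) : R) = 2 * b by ring.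
    by apply: mulf_neq0 => //; rewrite pnatr_eq0.
- rewrite mulf_eq0 negb_or => /andP [Hb HS] x v.
  have HG : in_lie_alg (drift alpha beta gamma lambda) (control_field a b c)
     (lie_bracket (control_field a b c) (drift alpha beta gamma lambda)).
    by apply: lie_br; [apply: lie_gen1 | apply: lie_gen0].
  have [HA|HA] := eqVneq A 0.
  + have HB : B != 0 by move: HS; rewrite HA; apply: contraNneq => ->; rewrite expr2 !mul0r addr0.
    apply: (@span2 R _ _ _ _ x (@lie_gen1 _ _ _) HG).
    rewrite G0 G1 f10 f11 !(mevalD, mevalB, mevalN, mevalM, mevalC, mevalXU, mevalZ).
    have -> : b * ((b * gamma + c * (lambda + beta)) + (b * (alpha / 2 * 2) + a * lambda) * x 0)
       - (c + a * x 0) * (b * beta) = b * B + b * x 0 * (b * (alpha / 2 * 2) + a * (lambda - beta)).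
      rewrite /B; ring.
    by rewrite hA HA mulr0 addr0 mulf_neq0.
  + apply: (@span2 R _ _ _ _ x (@lie_gen1 _ _ _) (lie_br (@lie_gen1 _ _ _) HG)).
    rewrite K0 K1 f10 f11 !(mevalD, mevalB, mevalN, mevalM, mevalC, mevalXU, mevalZ, meval0).
    have -> : b * (b * (b * (alpha / 2 * 2) + a * lambda) - b * beta * a) - (c + a * x 0) * 0
       = b * (b * (b * (alpha / 2 * 2) + a * (lambda - beta))) by ring.
    by rewrite hA !mulf_neq0.
Qed.
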